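(* Every connected threshold graph is detour covered, and every $2$-connected threshold graph is cummerbund covered.
   Context: All graphs are finite and simple. A graph $G$ is a threshold graph if there exist a function $f:V(G)\to\mathbb{R}_{\ge 0}$ and a real number $t\ge 0$ such that for any two distinct vertices $u,v$, $u$ and $v$ are adjacent if and only if $f(u)+f(v)>t$. A detour (resp. cummerbund) of a graph is a longest path (resp. longest cycle) in it. A graph is detour covered (resp. cummerbund covered) if every vertex lies in some detour (resp. cummerbund). *)

(* Defs.v *)
From Stdlib Require Import Reals.
From mathcomp Require Import all_boot.

Set Implicit Arguments.
Unset Strict Implicit.
Unset Printing Implicit Defensive.

Section Graphs.
Variable T : finType.
Variable e : rel T.

Definition simple_graph : Prop := irreflexive e /\ symmetric e.

Definition threshold_graph : Prop :=
  exists (f : T -> R) (t : R),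
    (forall v, Rle (IZR 0) (f v)) /\ Rle (IZR 0) t /\
    forall u v : T, u <> v -> (e u v <-> Rlt t (Rplus (f u) (f v))).

(* A path: non-empty sequence of pairwise distinct vertices, consecutive ones adjacent.
   Its length is (size p).-1, so comparing sizes compares lengths. *)
Definition gpath (p : seq T) : bool :=
  if p is x :: q then path e x q && uniq p else false.

Definition gcycle (c : seq T) : bool :=
  [&& 3 <= size c, uniq c & cycle e c].

Definition detour (p : seq T) : Prop :=
  gpath p /\ forall q, gpath q -> size q <= size p.
Definition cummerbund (c : seq T) : Prop :=
  gcycle c /\ forall d, gcycle d -> size d <= size c.

Definition detour_covered : Prop :=
  forall v : T, exists p, detour p /\ v \in p.
Definition cummerbund_covered : Prop :=
  forall v : T, exists c, cummerbund c /\ v \in c.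

Definition connected_graph : Prop :=
  0 < #|T| /\ forall u v : T, connect e u v.

Definition del_vertex (x : T) : rel T :=
  [rel a b | [&& e a b, a != x & b != x]].

Definition two_connected : Prop :=
  [/\ 3 <= #|T|, connected_graph &
      forall x u v : T, u != x -> v != x -> connect (del_vertex x) u v].

End Graphs.

(* Main.v *)
Require Import Defs.
From Stdlib Require Import Reals Lra Classical.
From mathcomp Require Import all_boot zify.

Set Implicit Arguments.
Unset Strict Implicit.
Unset Printing Implicit Defensive.

Section Thr.
Variables (T : finType) (e : rel T) (f : T -> R) (t : R).
Hypotheses (irr : irreflexive e) (sym : symmetric e)
  (Hf : forall u v : T, u <> v -> (e u v <-> Rlt t (Rplus (f u) (f v)))).

Lemma neq_of_e x y : e x y -> x != y.
Proof. by move=> H; apply/eqP => xy; subst; rewrite irr in H. Qed.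

Lemma e_w x y : e x y -> (Rlt t (Rplus (f x) (f y))).
Proof. move=> H; apply/Hf => //; apply/eqP; exact: neq_of_e. Qed.

Lemma w_e x y : x != y -> (Rlt t (Rplus (f x) (f y))) -> e x y.
Proof. by move=> /eqP xy H; apply/Hf. Qed.

Lemma dom w v x : e w x -> x != v -> (Rle (f w) (f v)) -> e v x.
Proof.
move=> H xv fw; apply: w_e; first by rewrite eq_sym.
have := e_w H; lra.
Qed.

Lemma univ v y x : e v y -> x != y -> (Rle (f v) (f x)) -> e y x.
Proof.
move=> H xy fx; apply: w_e; first by rewrite eq_sym.
have := e_w H; lra.
Qed.

Lemma sorted_rev_e s : sorted e (rev s) = sorted e s.
Proof.
rewrite rev_sorted; apply: eq_sorted => x y /=; exact: sym.
Qed.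

Lemma uniq_neq (X Z : seq T) x z : uniq (X ++ Z) -> x \in X -> z \in Z -> x != z.
Proof.
move=> U xX zZ; apply/eqP => xz; subst.
rewrite cat_uniq in U; case/and3P: U => _ /hasPn H _.
by move: (H z zZ); rewrite xX.
Qed.

Lemma comb (X Z : seq T) a A b B :
  sorted e (a :: A) -> sorted e (b :: B) -> e a b ->
  subseq ((a :: A) ++ (b :: B)) (X ++ Z) -> uniq (X ++ Z) ->
  size X + size Z <= (size A + size B).+3 ->
  exists W, [/\ sorted e W, uniq W, {subset W <= X ++ Z} &
                size X + size Z <= (size W).+1].
Proof.
move=> sA sB eab sub U sz.
exists (rev (a :: A) ++ b :: B); split.
- rewrite rev_cons cat_rcons sorted_cat_cons -rev_cons sorted_rev_e sA /=.
  by rewrite eab.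
- have U' := subseq_uniq sub U.
  rewrite (perm_uniq (_ : perm_eq _ ((a :: A) ++ b :: B))) //.
  by rewrite perm_cat2r perm_rev.
- move=> x; rewrite mem_cat mem_rev -mem_cat; exact: (mem_subseq sub).
- by rewrite size_cat size_rev /=; lia.
Qed.

Lemma KL (X Z : seq T) : sorted e X -> sorted e Z -> uniq (X ++ Z) ->
  exists W, [/\ sorted e W, uniq W, {subset W <= X ++ Z} &
                size X + size Z <= (size W).+1].
Proof.
case: X => [|p1 [|p2 X']].
- move=> _ sZ U; exists Z; split => //= x; lia.
- move=> _ sZ U; exists Z; split => //.
  + by move: U; rewrite cat_uniq => /and3P[].
  + by move=> x xZ; rewrite mem_cat xZ orbT.
- case: Z => [|q1 [|q2 Z']].
  + move=> sX _ U; exists (p1 :: p2 :: X'); rewrite cats0 in U; split => //.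
    * by move=> x; rewrite cats0.
    * by rewrite /=; lia.
  + move=> sX _ U; exists (p1 :: p2 :: X'); split => //.
    * by move: U; rewrite cat_uniq => /and3P[].
    * by move=> x xX; rewrite mem_cat xX.
    * by rewrite /=; lia.
  + move=> sX sZ U.
    have /= /andP[e12 _] := sX.
    have /= /andP[eq12 _] := sZ.
    have w12 := e_w e12; have wq := e_w eq12.
    destruct (Rle_or_lt (f q2) (f p1)) as [h1|h1].
      apply: (comb (X:=p1::p2::X') (Z:=q1::q2::Z') (a:=p1) (A:=p2::X') (b:=q1) (B:=q2::Z')) => //; last by rewrite /=; lia.
      -- apply: w_e; last by lra.
         by apply: (uniq_neq U); rewrite inE eqxx.
    destruct (Rle_or_lt (f q2) (f p2)) as [h2|h2].
    * apply: (comb (X:=p1::p2::X') (Z:=q1::q2::Z') (a:=p2) (A:=X') (b:=q1) (B:=q2::Z')) => //.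
      -- by move: sX => /= /andP[].
      -- apply: w_e; last by lra.
         by apply: (uniq_neq U); rewrite !inE eqxx ?orbT.
      -- by apply: cat_subseq; [apply: subseq_cons | apply: subseq_refl].
      -- by rewrite /=; lia.
    * apply: (comb (X:=p1::p2::X') (Z:=q1::q2::Z') (a:=p1) (A:=p2::X') (b:=q2) (B:=Z')) => //.
      -- by move: sZ => /= /andP[].
      -- apply: w_e; last by lra.
         by apply: (uniq_neq U); rewrite !inE eqxx ?orbT.
      -- by apply: cat_subseq; [apply: subseq_refl | apply: subseq_cons].
      -- by rewrite /=; lia.
Qed.

Lemma exists_max (Q : seq T -> Prop) (N : nat) c0 : Q c0 ->
  (forall c, Q c -> size c <= N) ->
  exists c, Q c /\ forall d, Q d -> size d <= size c.
Proof.
move=> Qc0 bnd.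
move: (leqnn (N - size c0)); move: {2}(N - size c0) => k.
elim: k c0 Qc0 => [|k IH] c0 Qc0 hk.
- exists c0; split=> // d Qd; have := bnd d Qd; have := bnd c0 Qc0; lia.
- case: (classic (exists d, Q d /\ size c0 < size d)) => [[d [Qd lt]] | H].
  + apply: (IH d Qd); have := bnd d Qd; lia.
  + exists c0; split=> // d Qd; case: (leqP (size d) (size c0)) => // lt.
    by exfalso; apply: H; exists d.
Qed.

Lemma uniq_size (s : seq T) : uniq s -> size s <= #|T|.
Proof. by move/card_uniqP <-; apply: max_card. Qed.

Lemma maxw (x0 : T) : exists m, forall x, (Rle (f x) (f m)).
Proof.
suff: forall s : seq T, exists m, forall x, x \in x0 :: s -> (Rle (f x) (f m)).
  move=> /(_ (enum T)) [m Hm]; exists m => x; apply: Hm.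
  by rewrite inE mem_enum orbT.
elim => [|a s [m Hm]].
  by exists x0 => x; rewrite inE => /eqP ->; lra.
destruct (Rle_or_lt (f a) (f m)) as [h|h].
- exists m => x; rewrite !inE; case/or3P => [/eqP ->|/eqP ->|xs] //.
  + by apply: Hm; rewrite inE eqxx.
  + by apply: Hm; rewrite inE xs orbT.
- exists a => x; rewrite !inE; case/or3P => [/eqP ->|/eqP ->|xs].
  + have := Hm x0; rewrite inE eqxx => /(_ isT); lra.
  + lra.
  + have := Hm x; rewrite inE xs orbT => /(_ isT); lra.
Qed.

Lemma conn_nb v a : connect e v a -> a != v -> exists y, e v y.
Proof.
case/connectP => [[|y p]] /=; first by move=> _ ->; rewrite eqxx.
by case/andP => evy _ _ _; exists y.
Qed.

Definition sw (w v x : T) : T := if x == w then v else x.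

Lemma sw_e (C : seq T) w v : v \notin C -> (Rle (f w) (f v)) ->
  {in C &, forall x y, e x y -> e (sw w v x) (sw w v y)}.
Proof.
move=> vC fw x y xC yC exy; rewrite /sw.
have yv : y != v by apply: contraNneq vC => <-.
have xv : x != v by apply: contraNneq vC => <-.
case: (x =P w) => [xw|xw]; case: (y =P w) => [yw|yw]; subst.
- by rewrite irr in exy.
- exact: dom exy yv fw.
- rewrite sym; apply: dom _ xv fw; by rewrite sym.
- exact: exy.
Qed.

Lemma sw_inj (C : seq T) w v : v \notin C -> {in C &, injective (sw w v)}.
Proof.
move=> vC x y xC yC; rewrite /sw.
case: (x =P w) => [->|xw]; case: (y =P w) => [->|yw] // H; subst.
- by rewrite yC in vC.
- by rewrite xC in vC.
Qed.

Lemma sw_mem (C : seq T) w v : w \in C -> v \in map (sw w v) C.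
Proof. by move=> wC; apply/mapP; exists w => //; rewrite /sw eqxx. Qed.

Lemma gpath_sorted p : gpath e p -> sorted e p /\ uniq p.
Proof. by case: p => //= x p /andP[]. Qed.

Lemma sw_gpath (P : seq T) w v : gpath e P -> v \notin P -> (Rle (f w) (f v)) ->
  gpath e (map (sw w v) P).
Proof.
move=> gP vP fw.
case: P gP vP => // a P' gP vP.
have hP : all (mem (a :: P')) (a :: P') by apply/allP.
move: gP => /= /andP[pP uP].
apply/andP; split.
- exact: (homo_path_in (sw_e vP fw) hP pP).
- have := map_inj_in_uniq (sw_inj (w:=w) vP); rewrite /= => ->.
  by rewrite uP.
Qed.

Lemma sw_gcycle (C : seq T) w v : gcycle e C -> v \notin C -> (Rle (f w) (f v)) ->
  gcycle e (map (sw w v) C).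
Proof.
move=> /and3P[s3 uC cC] vC fw.
have hC : all (mem C) C by apply/allP.
apply/and3P; split.
- by rewrite size_map.
- by rewrite (map_inj_in_uniq (sw_inj (w:=w) vC)).
- exact: (homo_cycle_in (sw_e vC fw) hC cC).
Qed.

Lemma ext_path v y W : e v y -> sorted e W -> uniq W -> v \notin W ->
  y \notin W -> (forall x, x \in W -> e y x) -> gpath e (v :: y :: W).
Proof.
move=> evy sW uW vW yW Hy /=.
rewrite evy uW yW andbT /= !inE negb_or vW (neq_of_e evy) /=.
by case: W sW uW vW yW Hy => //= w W' -> _ _ _ ->; rewrite ?inE ?eqxx.
Qed.

Lemma ext_cycle v y y' S : e v y -> e v y' -> y != y' -> sorted e S -> uniq S ->
  v \notin S -> y \notin S -> y' \notin S ->
  (forall x, x \in S -> e y x && e x y') -> (S = [::] -> e y y') ->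
  gcycle e (v :: y :: S ++ [:: y']).
Proof.
move=> evy evy' yy' sS uS vS yS y'S Hx H0.
apply/and3P; split.
- by rewrite /= size_cat /= addnC.
- rewrite cats1 /= rcons_uniq uS y'S andbT !inE !mem_rcons !inE !negb_or.
  rewrite (neq_of_e evy) (neq_of_e evy') yy' vS yS /=.
  done.
- rewrite cats1 /= evy rcons_path last_rcons (sym y' v) evy' andbT rcons_path /=.
  case: S sS uS vS yS y'S Hx H0 => [|s S'] sS _ _ _ _ Hx H0 /=.
  + by rewrite H0.
  + have := Hx s; rewrite inE eqxx => /(_ isT) /andP[-> _]; move: sS => /= ->.
    have := mem_last s S'; move/Hx => /andP[_ ->]; done.
Qed.

Lemma drop1 C z : gcycle e C -> z \in C ->
  exists R, [/\ sorted e R, uniq (z :: R), C =i z :: R & size C = (size R).+1].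
Proof.
move=> /and3P[_ uC cC] zC; move: uC cC; case/splitPr: zC => X Z uC cC.
exists (Z ++ X).
have Hr : rot (size X) (X ++ z :: Z) = z :: Z ++ X by rewrite rot_size_cat.
split.
- move: cC; rewrite -(rot_cycle (size X)) Hr /= rcons_path => /andP[H _].
  exact: path_sorted H.
- by rewrite -Hr rot_uniq.
- by move=> x; rewrite -Hr mem_rot.
- by rewrite !size_cat /= addnS addnC.
Qed.

Lemma nb2 : two_connected e -> forall v x, exists y, e v y /\ y != x.
Proof.
case=> c3 [_ conn] dc v x.
have [u [uv ux]] : exists u, u != v /\ u != x.
  case: (pickP (fun u => (u != v) && (u != x))) => [u /andP[] | H].
    by move=> ? ?; exists u.
  exfalso.
  have : #|T| <= #|[set v; x]|.
    apply: subset_leq_card; apply/subsetP => u _; move: (H u).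
    by rewrite !inE => /negbT; rewrite negb_and !negbK.
  move=> h; have := leq_trans c3 h; rewrite cards2; by case: (v != x).
case: (eqVneq v x) => [vx | vx].
- subst x; have [y eyv] := conn_nb (conn v u) uv.
  by exists y; split => //; rewrite eq_sym (neq_of_e eyv).
- have := dc x v u vx ux.
  case/connectP => [[|y p]] /=; first by move=> _ H; rewrite H eqxx in uv.
  case/andP => /and3P[H1 _ H3] _ _; by exists y.
Qed.

Lemma tri : two_connected e -> forall v : T, exists c, gcycle e c.
Proof.
move=> H2 v.
have [m Hm] := maxw v.
have [y [emy _]] := nb2 H2 m m.
have [w [eyw wm]] := nb2 H2 y m.
have emw : e m w by apply: dom eyw wm (Hm y).
exists [:: m; y; w]; apply/and3P; split => //.
- rewrite /= !inE negb_or (neq_of_e emy) (neq_of_e emw) (neq_of_e eyw) //.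
- by rewrite /= emy eyw sym emw.
Qed.

Lemma detour_cov : connected_graph e -> detour_covered e.
Proof.
move=> [_ conn] v.
have [P [gP maxP]] : exists P, detour e P.
  have [P [gP maxP]] := exists_max (Q := fun p => gpath e p) (N := #|T|)
     (c0 := [:: v]) isT (fun c gc => uniq_size (gpath_sorted gc).2).
  by exists P; split.
have bigger : forall Q, gpath e Q -> size P <= size Q -> v \in Q ->
    exists p, detour e p /\ v \in p.
  move=> Q gQ sz vQ; exists Q; split => //; split => // q gq.
  exact: leq_trans (maxP q gq) sz.
case vP: (v \in P); first by exists P.
case: (classic (exists w, w \in P /\ (Rle (f w) (f v)))) => [[w [wP fw]] | Hno].
  apply: (bigger (map (sw w v) P)).
  - by apply: sw_gpath => //; rewrite vP.
  - by rewrite size_map.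
  - exact: sw_mem.
have Hh : forall x, x \in P -> (Rle (f v) (f x)).
  move=> x xP; destruct (Rle_or_lt (f x) (f v)) as [h|h]; last lra.
  by exfalso; apply: Hno; exists x.
have [sP uP] := gpath_sorted gP.
have [a aP] : exists a, a \in P by case: P gP {maxP bigger vP Hno Hh sP uP} => // a ?; exists a; rewrite inE eqxx.
have [y evy] : exists y, e v y.
  apply: (conn_nb (conn v a)); apply: contraFneq vP => <-; done.
have univP : forall x, x \in P -> x != y -> e y x.
  move=> x xP xy; exact: univ evy xy (Hh x xP).
case yP: (y \in P).
- move: gP sP uP univP maxP bigger vP Hh aP.
  case/splitPr: yP => X Z gP sP uP univP maxP bigger vP Hh aP.
  have [sX sZ] : sorted e X /\ sorted e Z.
    have [s1 s2] := cat_sorted2 sP; split => //; exact: path_sorted s2.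
  have uXZ : uniq (X ++ Z).
    apply: subseq_uniq uP; apply: cat_subseq; [exact: subseq_refl | exact: subseq_cons].
  have yXZ : y \notin X ++ Z.
    by move: uP; rewrite -cat1s uniq_catCA cat1s /= => /andP[].
  have [W [sW uW subW szW]] := KL sX sZ uXZ.
  apply: (bigger (v :: y :: W)).
  + apply: ext_path => //.
    * apply: contraFN vP => /subW; rewrite !mem_cat inE => /orP[->|->] //.
      by rewrite ?orbT.
    * by apply: contra yXZ => /subW.
    * move=> x /subW xW; apply: univP.
      -- by move: xW; rewrite !mem_cat inE => /orP[->|->] //; rewrite !orbT.
      -- by apply: contraNneq yXZ => <-.
  + by rewrite size_cat /=; lia.
  + by rewrite inE eqxx.
- apply: (bigger (v :: y :: P)).
  + apply: ext_path => //.
    * by rewrite vP.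
    * by rewrite yP.
    * move=> x xP; apply: univP => //; by apply: contraFneq yP => <-.
  + by rewrite /=; lia.
  + by rewrite inE eqxx.
Qed.

Lemma cycle_sorted s : cycle e s -> sorted e s.
Proof. by case: s => //= x s; rewrite rcons_path => /andP[]. Qed.

Lemma cyc_cov : two_connected e -> cummerbund_covered e.
Proof.
move=> H2 v.
have [C0 gC0] := tri H2 v.
have bnd : forall c, gcycle e c -> size c <= #|T|.
  by move=> c /and3P[_ u _]; exact: uniq_size.
have [C [gC maxC]] : exists C, cummerbund e C.
  have [C [gC maxC]] := exists_max (Q := fun p => gcycle e p) gC0 bnd.
  by exists C; split.
have bigger : forall Q, gcycle e Q -> size C <= size Q -> v \in Q ->
    exists c, cummerbund e c /\ v \in c.
  move=> Q gQ sz vQ; exists Q; split => //; split => // q gq.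
  exact: leq_trans (maxC q gq) sz.
case vC: (v \in C); first by exists C.
case: (classic (exists w, w \in C /\ (Rle (f w) (f v)))) => [[w [wC fw]] | Hno].
  apply: (bigger (map (sw w v) C)).
  - by apply: sw_gcycle => //; rewrite vC.
  - by rewrite size_map.
  - exact: sw_mem.
have Hh : forall x, x \in C -> (Rle (f v) (f x)).
  move=> x xC; destruct (Rle_or_lt (f x) (f v)) as [h|h]; last lra.
  by exfalso; apply: Hno; exists x.
have [y [evy _]] := nb2 H2 v v.
have [y' [evy' y'y]] := nb2 H2 v y.
have univC : forall z x, e v z -> x \in C -> x != z -> e z x.
  move=> z x evz xC xz; exact: univ evz xz (Hh x xC).
have [sC3 uC cC] := and3P gC.
suff [S [[sS uS subS yS y'S] [S0 szS]]] : exists S,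
   [/\ sorted e S, uniq S, {subset S <= C}, y \notin S & y' \notin S] /\
   ((S = [::] -> e y y') /\ size C <= (size S).+3).
  apply: (bigger (v :: y :: S ++ [:: y'])).
  - apply: ext_cycle => //.
    + by rewrite eq_sym.
    + by apply: contraFN vC => /subS.
    + move=> x xS; have xC := subS x xS.
      rewrite (univC y x evy xC); last by apply: contraNneq yS => <-.
      rewrite sym (univC y' x evy' xC) //; by apply: contraNneq y'S => <-.
  - by rewrite /= size_cat /= addn1.
  - by rewrite inE eqxx.
case yC: (y \in C).
- have [R [sR uyR CR szR]] := drop1 gC yC.
  case y'R: (y' \in R).
  + move: sR uyR CR szR; case/splitPr: y'R => R1 R2 sR uyR CR szR.
    have [sX sZ] : sorted e R1 /\ sorted e R2.
      have [s1 s2] := cat_sorted2 sR; split => //; exact: path_sorted s2.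
    have uR : uniq (R1 ++ y' :: R2) by move: uyR => /= /andP[].
    have uXZ : uniq (R1 ++ R2).
      apply: subseq_uniq uR; apply: cat_subseq; [exact: subseq_refl | exact: subseq_cons].
    have y'XZ : y' \notin R1 ++ R2.
      by move: uR; rewrite -cat1s uniq_catCA cat1s /= => /andP[].
    have yR : y \notin R1 ++ y' :: R2 by move: uyR => /= /andP[].
    have [W [sW uW subW szW]] := KL sX sZ uXZ.
    exists W; split; [split | split] => //.
    * move=> x /subW; rewrite CR inE !mem_cat inE => /orP[->|->]; by rewrite ?orbT.
    * apply: contra yR => /subW; rewrite !mem_cat inE => /orP[->|->]; by rewrite ?orbT.
    * by apply: contra y'XZ => /subW.
    * move=> _; apply: univC => //; by rewrite CR inE mem_cat inE eqxx !orbT.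
    * clear -szR szW; rewrite szR size_cat /=; lia.
  + have yR : y \notin R by move: uyR => /= /andP[].
    have uR : uniq R by move: uyR => /= /andP[].
    exists R; split; [split | split] => //.
    * by move=> x xR; rewrite CR inE xR orbT.
    * by rewrite y'R.
    * by move=> R0; move: sC3; rewrite szR R0.
    * clear -szR; rewrite szR; lia.
- case y'C: (y' \in C).
  + have [R [sR uyR CR szR]] := drop1 gC y'C.
    have uR : uniq R by move: uyR => /= /andP[].
    have subR : {subset R <= C} by move=> x xR; rewrite CR inE xR orbT.
    exists R; split; [split | split] => //.
    * by apply: contraFN yC => /subR.
    * by move: uyR => /= /andP[].
    * by move=> R0; move: sC3; rewrite szR R0.
    * clear -szR; rewrite szR; lia.
  + exists C; split; [split | split] => //.
    * exact: cycle_sorted.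
    * by rewrite yC.
    * by rewrite y'C.
    * by move=> C0'; move: sC3; rewrite C0'.
    * by apply: leq_trans (leqnSn _) (leq_trans (leqnSn _) (leqnSn _)).
Qed.

End Thr.

Theorem corollary13 (T : finType) (e : rel T) :
  simple_graph e -> threshold_graph e ->
  (connected_graph e -> detour_covered e) /\
  (two_connected e -> cummerbund_covered e).
Proof.
move=> [irr sym] [f [t [_ [_ Hf]]]]; split.
- exact: (detour_cov irr sym Hf).
- exact: (cyc_cov irr sym Hf).
Qed.
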